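(* Let $k\ge2$ and $-\frac{\pi}{2}\le\theta_1<\theta_2<\dots<\theta_k\le\frac{\pi}{2}$, $\theta_{\min}=\min_{p\ne j}|\theta_p-\theta_j|$, and $V_k(k-1)=(\phi_{k-1}(e^{i\theta_1}),\dots,\phi_{k-1}(e^{i\theta_k}))$. Then $$\|V_k(k-1)^{-1}\|_\infty\le\frac{\pi^{k-1}}{\zeta(k)\,\theta_{\min}^{k-1}}.$$
   Context: $\phi_s(z)=(1,z,\dots,z^s)^T$. For an integer $k\ge1$, $\zeta(k)=\big((\tfrac{k-1}{2})!\big)^2$ if $k$ is odd and $\zeta(k)=(\tfrac{k}{2})!(\tfrac{k-2}{2})!$ if $k$ is even. $\|\cdot\|_\infty$ is the matrix norm induced by the vector $\ell^\infty$ norm (maximum absolute row sum). *)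

(* Defs.v *)
From Stdlib Require Import Reals Arith.
Open Scope R_scope.

(* Complex numbers as (real part, imaginary part). *)
Definition C : Type := (R * R)%type.
Definition C0 : C := (0, 0).
Definition C1 : C := (1, 0).
Definition Cadd (z w : C) : C := (fst z + fst w, snd z + snd w).
Definition Cmul (z w : C) : C :=
  (fst z * fst w - snd z * snd w, fst z * snd w + snd z * fst w).
Fixpoint Cpow (z : C) (n : nat) : C :=
  match n with O => C1 | S n => Cmul z (Cpow z n) end.
Definition Cmod (z : C) : R := sqrt (fst z * fst z + snd z * snd z).
Definition Cexpi (t : R) : C := (cos t, sin t).

Fixpoint Csum (n : nat) (f : nat -> C) : C :=
  match n with O => C0 | S n => Cadd (Csum n f) (f n) end.

(* k x k complex matrices: entries A i j for i, j < k (0-based). *)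
Definition Cmat := nat -> nat -> C.
Definition mmul (k : nat) (A B : Cmat) : Cmat :=
  fun i j => Csum k (fun l => Cmul (A i l) (B l j)).
Definition is_inverse (k : nat) (A W : Cmat) : Prop :=
  forall i j, (i < k)%nat -> (j < k)%nat ->
    mmul k A W i j = (if Nat.eqb i j then C1 else C0) /\
    mmul k W A i j = (if Nat.eqb i j then C1 else C0).

Fixpoint Rsum (n : nat) (f : nat -> R) : R :=
  match n with O => 0 | S n => Rsum n f + f n end.
Fixpoint Rmax_upto (n : nat) (f : nat -> R) : R :=
  match n with O => 0 | S n => Rmax (Rmax_upto n f) (f n) end.
(* induced l^infty matrix norm: maximum absolute row sum *)
Definition norm_inf (k : nat) (A : Cmat) : R :=
  Rmax_upto k (fun i => Rsum k (fun j => Cmod (A i j))).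

(* V_k(k-1) = (phi_{k-1}(e^{i th_1}), ..., phi_{k-1}(e^{i th_k})):
   column j is (1, z_j, ..., z_j^{k-1}) with z_j = e^{i th_j}; th is 0-based. *)
Definition Vand (th : nat -> R) : Cmat := fun p j => Cpow (Cexpi (th j)) p.

Definition zeta (k : nat) : nat :=
  if Nat.odd k then (fact ((k - 1) / 2) * fact ((k - 1) / 2))%nat
  else (fact (k / 2) * fact ((k - 2) / 2))%nat.

Definition is_min_sep (k : nat) (th : nat -> R) (m : R) : Prop :=
  (exists p j, (p < k)%nat /\ (j < k)%nat /\ p <> j /\ m = Rabs (th p - th j)) /\
  (forall p j, (p < k)%nat -> (j < k)%nat -> p <> j -> m <= Rabs (th p - th j)).

(* Main.v *)
Require Import Defs.
From Stdlib Require Import Reals Arith Lia Lra Psatz.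
From Coquelicot Require Complex.
Module CC := Coquelicot.Complex.
Open Scope R_scope.
Notation CT := Defs.C.
Notation C0 := Defs.C0.
Notation C1 := Defs.C1.


Definition Copp (z : CT) : CT := (- fst z, - snd z).
Definition Csub (z w : CT) : CT := Cadd z (Copp w).
Definition Cinv (z : CT) : CT := CC.Cinv z.
Definition Cdiv (z w : CT) : CT := Cmul z (Cinv w).

Lemma Cring : ring_theory C0 C1 Cadd Cmul Csub Copp eq.
Proof.
  constructor; intros; unfold Defs.C0, Defs.C1, Cadd, Cmul, Csub, Copp;
  try (apply injective_projections; simpl; ring).
Qed.
Add Ring Cring : Cring.

Lemma Cfield : field_theory C0 C1 Cadd Cmul Csub Copp Cdiv Cinv eq.
Proof.
  constructor.
  - exact Cring.
  - unfold Defs.C0, Defs.C1. intro H. inversion H. lra.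
  - reflexivity.
  - intros p Hp. unfold Cinv. exact (CC.Cinv_l p Hp).
Qed.
Add Field Cfield : Cfield.

Lemma test (a b c : CT) : c <> C0 -> Cmul (Cadd a b) (Cdiv c c) = Cadd b a.
Proof. intros. field. auto. Qed.

Lemma Cmod_eq z : Cmod z = CC.Cmod z.
Proof. unfold Cmod, CC.Cmod. f_equal. simpl. ring. Qed.


Lemma Csum_ext n f g : (forall i, (i < n)%nat -> f i = g i) -> Csum n f = Csum n g.
Proof. induction n; intros H; simpl; auto. rewrite IHn by (intros; apply H; lia). rewrite H by lia. auto. Qed.

Lemma Csum_add n f g : Csum n (fun i => Cadd (f i) (g i)) = Cadd (Csum n f) (Csum n g).
Proof. induction n; simpl. unfold Defs.C0, Cadd; simpl; f_equal; ring. rewrite IHn. ring. Qed.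

Lemma Csum_sub n f g : Csum n (fun i => Csub (f i) (g i)) = Csub (Csum n f) (Csum n g).
Proof. induction n; simpl. unfold Defs.C0, Csub, Cadd, Copp; simpl; f_equal; ring. rewrite IHn. ring. Qed.

Lemma Csum_mulr n f c : Cmul (Csum n f) c = Csum n (fun i => Cmul (f i) c).
Proof. induction n; simpl. unfold Defs.C0, Cmul; simpl; f_equal; ring. rewrite <- IHn. ring. Qed.

Lemma Csum_mull n f c : Cmul c (Csum n f) = Csum n (fun i => Cmul c (f i)).
Proof. induction n; simpl. unfold Defs.C0, Cmul; simpl; f_equal; ring. rewrite <- IHn. ring. Qed.

Lemma Csum_zero n f : (forall i, (i < n)%nat -> f i = C0) -> Csum n f = C0.
Proof. induction n; intros H; simpl; auto. rewrite IHn by (intros; apply H; lia). rewrite H by lia. ring. Qed.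

Lemma Csum_swap n m (f : nat -> nat -> CT) :
  Csum n (fun a => Csum m (fun b => f a b)) = Csum m (fun b => Csum n (fun a => f a b)).
Proof.
  induction n; simpl.
  - symmetry. apply Csum_zero. auto.
  - rewrite IHn. rewrite <- Csum_add. reflexivity.
Qed.

Lemma Csum_shift n f : Csum (S n) f = Cadd (f 0%nat) (Csum n (fun i => f (S i))).
Proof.
  induction n.
  - simpl. ring.
  - change (Csum (S (S n)) f) with (Cadd (Csum (S n) f) (f (S n))). rewrite IHn. simpl. ring.
Qed.

Lemma Csum_delta_r n f i : (i < n)%nat ->
  Csum n (fun l => Cmul (f l) (if Nat.eqb l i then C1 else C0)) = f i.
Proof.
  induction n; intros H. lia.
  simpl. destruct (Nat.eq_dec i n).
  - subst. rewrite Csum_zero. rewrite Nat.eqb_refl. ring.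
    intros l Hl. destruct (Nat.eqb_spec l n). lia. ring.
  - rewrite IHn by lia. destruct (Nat.eqb_spec n i). lia. ring.
Qed.

Lemma Csum_delta_l n f i : (i < n)%nat ->
  Csum n (fun l => Cmul (if Nat.eqb i l then C1 else C0) (f l)) = f i.
Proof.
  intros H. rewrite <- (Csum_delta_r n f i H). apply Csum_ext. intros l _.
  rewrite Nat.eqb_sym. ring.
Qed.

Lemma mmul_assoc k (A B D : Cmat) i j :
  mmul k (mmul k A B) D i j = mmul k A (mmul k B D) i j.
Proof.
  unfold mmul.
  transitivity (Csum k (fun l => Csum k (fun r => Cmul (A i r) (Cmul (B r l) (D l j))))).
  - apply Csum_ext. intros l _. rewrite Csum_mulr. apply Csum_ext. intros. ring.
  - rewrite Csum_swap. apply Csum_ext. intros r _. rewrite Csum_mull. reflexivity.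
Qed.

Definition ev (c : nat -> CT) (n : nat) (x : CT) : CT :=
  Csum n (fun q => Cmul (c q) (Cpow x q)).

Definition mulLin (p : nat -> CT) (a : CT) : nat -> CT :=
  fun i => Csub (match i with O => C0 | S i' => p i' end) (Cmul a (p i)).

Lemma ev_S c n x : ev c (S n) x = Cadd (ev c n x) (Cmul (c n) (Cpow x n)).
Proof. reflexivity. Qed.

Lemma ev_mulLin p a n x : p n = C0 ->
  ev (mulLin p a) (S n) x = Cmul (ev p n x) (Csub x a).
Proof.
  intros Hn. unfold ev, mulLin.
  transitivity (Cadd (Csum (S n) (fun q => Cmul (match q with O => C0 | S i' => p i' end) (Cpow x q)))
                     (Copp (Cmul a (Csum (S n) (fun q => Cmul (p q) (Cpow x q)))))).
  - transitivity (Csum (S n) (fun q => Csub (Cmul (match q with O => C0 | S i' => p i' end) (Cpow x q)) (Cmul a (Cmul (p q) (Cpow x q))))).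
    + apply Csum_ext. intros. unfold Csub at 2. ring.
    + rewrite Csum_sub. rewrite Csum_mull. reflexivity.
  - rewrite Csum_shift. simpl Csum at 2. rewrite Hn.
    replace (Csum n (fun i => Cmul (p i) (Cpow x (S i))))
      with (Cmul x (Csum n (fun q => Cmul (p q) (Cpow x q)))).
    + ring.
    + rewrite Csum_mull. apply Csum_ext. intros. simpl. ring.
Qed.

Lemma Cmul_integral z w : Cmul z w = C0 -> z <> C0 -> w = C0.
Proof.
  intros H Hz. replace w with (Cmul (Cinv z) (Cmul z w)) by (field; auto).
  rewrite H. ring.
Qed.

Definition quoc (c : nat -> CT) (a : CT) (n i : nat) : CT :=
  Csum (n - i) (fun t => Cmul (c (i + 1 + t)%nat) (Cpow a t)).

Lemma quoc_ge c a n i : (n <= i)%nat -> quoc c a n i = C0.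
Proof. intros H. unfold quoc. replace (n - i)%nat with 0%nat by lia. reflexivity. Qed.

Lemma quoc_rec c a n i : (i < n)%nat ->
  quoc c a n i = Cadd (c (S i)) (Cmul a (quoc c a n (S i))).
Proof.
  intros H. unfold quoc. replace (n - i)%nat with (S (n - S i)) by lia.
  rewrite Csum_shift. rewrite Csum_mull. f_equal.
  - replace (i + 1 + 0)%nat with (S i) by lia. simpl. ring.
  - apply Csum_ext. intros t _. replace (i + 1 + S t)%nat with (S i + 1 + t)%nat by lia.
    simpl. ring.
Qed.

Lemma ev_quoc c a n x :
  ev c (S n) x = Cadd (Cmul (ev (quoc c a n) n x) (Csub x a))
                      (Cadd (c 0%nat) (Cmul a (quoc c a n 0%nat))).
Proof.
  rewrite <- ev_mulLin by (apply quoc_ge; lia).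
  unfold ev. rewrite !Csum_shift.
  replace (Csum n (fun i => Cmul (mulLin (quoc c a n) a (S i)) (Cpow x (S i))))
    with (Csum n (fun i => Cmul (c (S i)) (Cpow x (S i)))).
  - unfold mulLin. simpl. ring.
  - apply Csum_ext. intros i Hi. f_equal. unfold mulLin.
    rewrite quoc_rec by lia. ring.
Qed.

Lemma roots n : forall (c : nat -> CT) (w : nat -> CT),
  (forall i j, (i < n)%nat -> (j < n)%nat -> i <> j -> w i <> w j) ->
  (forall i, (i < n)%nat -> ev c n (w i) = C0) ->
  forall q, (q < n)%nat -> c q = C0.
Proof.
  induction n; intros c w Hw Hr q Hq. lia.
  set (a := w n).
  assert (Hr0 : Cadd (c 0%nat) (Cmul a (quoc c a n 0%nat)) = C0).
  { pose proof (Hr n (Nat.lt_succ_diag_r n)) as H. rewrite (ev_quoc c a) in H.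
    fold a in H. replace (Csub a a) with C0 in H by ring.
    rewrite <- H. ring. }
  assert (Hq0 : forall i, (i < n)%nat -> quoc c a n i = C0).
  { apply (IHn _ w).
    - intros; apply Hw; lia.
    - intros i Hi. pose proof (Hr i ltac:(lia)) as H. rewrite (ev_quoc c a) in H.
      rewrite Hr0 in H.
      apply (Cmul_integral (Csub (w i) a)).
      + rewrite <- H. ring.
      + intro E. apply (Hw i n); try lia. unfold a in E.
        replace (w i) with (Cadd (Csub (w i) (w n)) (w n)) by ring. rewrite E. ring. }
  destruct q.
  - replace (c 0%nat) with (Csub (Cadd (c 0%nat) (Cmul a (quoc c a n 0%nat))) (Cmul a (quoc c a n 0%nat))) by ring.
    rewrite Hr0. destruct n. rewrite quoc_ge by lia. ring. rewrite Hq0 by lia. ring.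
  - pose proof (quoc_rec c a n q ltac:(lia)) as E.
    rewrite Hq0 in E by lia.
    destruct (Nat.eq_dec (S q) n).
    + rewrite quoc_ge in E by lia. rewrite E. ring.
    + rewrite Hq0 in E by lia. rewrite E. ring.
Qed.


Lemma Cmod_mul z w : Cmod (Cmul z w) = Cmod z * Cmod w.
Proof. rewrite !Cmod_eq. exact (CC.Cmod_mult z w). Qed.
Lemma Cmod_sub_le z w : Cmod (Csub z w) <= Cmod z + Cmod w.
Proof. rewrite !Cmod_eq. rewrite <- (CC.Cmod_opp w). exact (CC.Cmod_triangle z (CC.Copp w)). Qed.
Lemma Cmod_ge0 z : 0 <= Cmod z.
Proof. unfold Cmod. apply sqrt_pos. Qed.
Lemma Cmod_C0 : Cmod C0 = 0.
Proof. unfold Cmod, Defs.C0. simpl. replace (0*0+0*0) with 0 by ring. apply sqrt_0. Qed.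
Lemma Cmod_inv z : z <> C0 -> Cmod (Cinv z) = / Cmod z.
Proof. intros H. rewrite !Cmod_eq. exact (CC.Cmod_inv z H). Qed.
Lemma Cmod_pos z : z <> C0 -> 0 < Cmod z.
Proof. intros H. rewrite Cmod_eq. apply CC.Cmod_gt_0. exact H. Qed.

Lemma Rsum_ext n f g : (forall i, (i < n)%nat -> f i = g i) -> Rsum n f = Rsum n g.
Proof. induction n; intros H; simpl; auto. rewrite IHn by (intros; apply H; lia). rewrite H by lia. auto. Qed.
Lemma Rsum_le n f g : (forall i, (i < n)%nat -> f i <= g i) -> Rsum n f <= Rsum n g.
Proof. induction n; intros H; simpl. lra. pose proof (H n ltac:(lia)). pose proof (IHn ltac:(intros; apply H; lia)). lra. Qed.
Lemma Rsum_add n f g : Rsum n (fun i => f i + g i) = Rsum n f + Rsum n g.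
Proof. induction n; simpl. ring. rewrite IHn. ring. Qed.
Lemma Rsum_scal n f c : Rsum n (fun i => c * f i) = c * Rsum n f.
Proof. induction n; simpl. ring. rewrite IHn. ring. Qed.
Lemma Rsum_shift n f : Rsum (S n) f = f 0%nat + Rsum n (fun i => f (S i)).
Proof. induction n. simpl. ring. change (Rsum (S (S n)) f) with (Rsum (S n) f + f (S n)). rewrite IHn. simpl. ring. Qed.
Lemma Rsum_nonneg n f : (forall i, (i < n)%nat -> 0 <= f i) -> 0 <= Rsum n f.
Proof. induction n; intros H; simpl. lra. pose proof (H n ltac:(lia)). pose proof (IHn ltac:(intros; apply H; lia)). lra. Qed.

Definition NL (p : nat -> CT) (m : nat) : R := Rsum m (fun q => Cmod (p q)).

Lemma NL_mulLin p a m : p m = C0 -> NL (mulLin p a) (S m) <= (1 + Cmod a) * NL p m.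
Proof.
  intros Hm. unfold NL.
  apply Rle_trans with (Rsum (S m) (fun q => Cmod (match q with O => C0 | S i' => p i' end) + Cmod a * Cmod (p q))).
  - apply Rsum_le. intros i _. unfold mulLin. eapply Rle_trans. apply Cmod_sub_le. rewrite Cmod_mul. lra.
  - rewrite Rsum_add, Rsum_scal, Rsum_shift. simpl Rsum at 2. rewrite Hm, Cmod_C0. lra.
Qed.

Section Lag.
Variable z : nat -> CT.
Variable j : nat.

Fixpoint PP (n : nat) : nat -> CT :=
  match n with O => fun i => if Nat.eqb i 0 then C1 else C0
  | S n => if Nat.eqb n j then PP n else mulLin (PP n) (z n) end.

Fixpoint Q (n : nat) (x : CT) : CT :=
  match n with O => C1
  | S n => if Nat.eqb n j then Q n x else Cmul (Q n x) (Csub x (z n)) end.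

Fixpoint Rprodx (n : nat) (f : nat -> R) : R :=
  match n with O => 1
  | S n => if Nat.eqb n j then Rprodx n f else Rprodx n f * f n end.

Lemma PP_deg n : forall i, ((n < i)%nat -> PP n i = C0) /\ ((j < n)%nat -> (n <= i)%nat -> PP n i = C0).
Proof.
  induction n; intros i; simpl.
  - split; intros; try lia. destruct (Nat.eqb_spec i 0); auto; lia.
  - destruct (Nat.eqb_spec n j).
    + split; intros; apply (proj1 (IHn i)); lia.
    + unfold mulLin. split; intros.
      * destruct i. lia. rewrite (proj1 (IHn i)) by lia. rewrite (proj1 (IHn (S i))) by lia. ring.
      * destruct i. lia. rewrite (proj2 (IHn i)) by lia. rewrite (proj1 (IHn (S i))) by lia. ring.
Qed.

Lemma ev_PP n x : ev (PP n) (S n) x = Q n x.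
Proof.
  induction n; simpl.
  - unfold ev. simpl. ring.
  - destruct (Nat.eqb_spec n j).
    + rewrite ev_S. rewrite IHn. rewrite (proj1 (PP_deg n (S n))) by lia. ring.
    + rewrite ev_mulLin. rewrite IHn. reflexivity. apply (proj1 (PP_deg n (S n))). lia.
Qed.

Lemma ev_PP' n x : (j < n)%nat -> ev (PP n) n x = Q n x.
Proof.
  intros H. rewrite <- ev_PP. rewrite ev_S. rewrite (proj2 (PP_deg n n)) by lia. ring.
Qed.

Lemma NL_PP n : NL (PP n) (S n) <= Rprodx n (fun l => 1 + Cmod (z l)).
Proof.
  induction n; simpl.
  - unfold NL. simpl. unfold Defs.C1, Cmod. simpl. replace (1*1+0*0) with 1 by ring. rewrite sqrt_1. lra.
  - destruct (Nat.eqb_spec n j).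
    + unfold NL in *. simpl Rsum in *. rewrite (proj1 (PP_deg n (S n))) by lia. rewrite Cmod_C0. lra.
    + eapply Rle_trans. apply NL_mulLin. apply (proj1 (PP_deg n (S n))); lia.
      pose proof (Cmod_ge0 (z n)). rewrite Rmult_comm. apply Rmult_le_compat_r; lra.
Qed.

Lemma Q_root n i : (i < n)%nat -> i <> j -> Q n (z i) = C0.
Proof.
  induction n; intros H Hij. lia. simpl.
  destruct (Nat.eqb_spec n j).
  - apply IHn; lia.
  - destruct (Nat.eq_dec i n). subst. replace (Csub (z n) (z n)) with C0 by ring. ring.
    rewrite IHn by lia. ring.
Qed.

Lemma Cmod_Q n x : Cmod (Q n x) = Rprodx n (fun l => Cmod (Csub x (z l))).
Proof.
  induction n; simpl.
  - unfold Defs.C1, Cmod. simpl. replace (1*1+0*0) with 1 by ring. apply sqrt_1.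
  - destruct (Nat.eqb_spec n j). auto. rewrite Cmod_mul, IHn. auto.
Qed.

Lemma Rprodx_pos n f : (forall l, (l < n)%nat -> l <> j -> 0 < f l) -> 0 < Rprodx n f.
Proof.
  induction n; intros H; simpl. lra. destruct (Nat.eqb_spec n j). apply IHn; intros; apply H; lia.
  apply Rmult_lt_0_compat. apply IHn; intros; apply H; lia. apply H; lia.
Qed.

Lemma Rprodx_nonneg n f : (forall l, (l < n)%nat -> l <> j -> 0 <= f l) -> 0 <= Rprodx n f.
Proof.
  induction n; intros H; simpl. lra. destruct (Nat.eqb_spec n j). apply IHn; intros; apply H; lia.
  apply Rmult_le_pos. apply IHn; intros; apply H; lia. apply H; lia.
Qed.

Lemma Rprodx_le n f g : (forall l, (l < n)%nat -> l <> j -> 0 <= f l <= g l) -> Rprodx n f <= Rprodx n g.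
Proof.
  induction n; intros H; simpl. lra. destruct (Nat.eqb_spec n j). apply IHn; intros; apply H; lia.
  assert (0 <= Rprodx n f) by (apply Rprodx_nonneg; intros; apply H; lia).
  pose proof (H n ltac:(lia) n0). pose proof (IHn ltac:(intros; apply H; lia)). apply Rmult_le_compat; lra.
Qed.

Lemma Rprodx_mul n f g : Rprodx n (fun l => f l * g l) = Rprodx n f * Rprodx n g.
Proof. induction n; simpl. ring. destruct (Nat.eqb_spec n j). auto. rewrite IHn. ring. Qed.

Lemma Rprodx_const n c : (j < n)%nat -> Rprodx n (fun _ => c) = c ^ (n - 1).
Proof.
  assert (G : Rprodx n (fun _ => c) = c ^ (if Nat.ltb j n then n - 1 else n)).
  { induction n; simpl. auto. destruct (Nat.eqb_spec n j).
    - rewrite IHn. subst. destruct (Nat.ltb_spec j j); try lia. destruct (Nat.ltb_spec j (S j)); try lia.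
      f_equal. lia.
    - rewrite IHn. destruct (Nat.ltb_spec j n); destruct (Nat.ltb_spec j (S n)); try lia.
      + replace (n - 0)%nat with (S (n - 1)) by lia. simpl. ring.
      + simpl. ring. }
  intros H. rewrite G. destruct (Nat.ltb_spec j n); auto; lia.
Qed.

Lemma Q_nz n : (forall a b, (a < n)%nat -> (b < n)%nat -> a <> b -> z a <> z b) ->
  (j < n)%nat -> Q n (z j) <> C0.
Proof.
  intros Hd Hj.
  assert (G : forall m, (m <= n)%nat -> Q m (z j) <> C0).
  { induction m; intros Hm; simpl.
    - unfold Defs.C1, Defs.C0. intro E; inversion E; lra.
    - destruct (Nat.eqb_spec m j). apply IHm; lia.
      intro E. apply (Hd j m); try lia.
      assert (Csub (z j) (z m) = C0).
      { apply (Cmul_integral (Q m (z j))). exact E. apply IHm; lia. }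
      replace (z j) with (Cadd (Csub (z j) (z m)) (z m)) by ring. rewrite H. ring. }
  apply G; lia.
Qed.

End Lag.


Section Mat.
Variable z : nat -> CT.
Variable k : nat.
Hypothesis Hd : forall a b, (a < k)%nat -> (b < k)%nat -> a <> b -> z a <> z b.

Definition V : Cmat := fun p j => Cpow (z j) p.
Definition W0 : Cmat := fun j q => Cmul (PP z j k q) (Cinv (Q z j k (z j))).
Definition del (i j : nat) : CT := if Nat.eqb i j then C1 else C0.

Lemma W0V j i : (j < k)%nat -> (i < k)%nat -> mmul k W0 V j i = del j i.
Proof.
  intros Hj Hi. unfold mmul, W0, V, del.
  transitivity (Cmul (Cinv (Q z j k (z j))) (ev (PP z j k) k (z i))).
  - unfold ev. rewrite Csum_mull. apply Csum_ext. intros. ring.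
  - rewrite ev_PP' by auto. pose proof (Q_nz z j k Hd Hj).
    destruct (Nat.eqb_spec j i).
    + subst; field; auto.
    + rewrite (Q_root z j k i) by lia. ring.
Qed.

Lemma VW0 p q : (p < k)%nat -> (q < k)%nat -> mmul k V W0 p q = del p q.
Proof.
  intros Hp Hq.
  set (M := fun a b => Csub (mmul k V W0 a b) (del a b)).
  assert (HM : forall a i, (a < k)%nat -> (i < k)%nat -> ev (M a) k (z i) = C0).
  { intros a i Ha Hi. unfold ev, M.
    transitivity (Csub (mmul k (mmul k V W0) V a i) (mmul k del V a i)).
    - change (mmul k (mmul k V W0) V a i) with (Csum k (fun l => Cmul (mmul k V W0 a l) (V l i))).
      change (mmul k del V a i) with (Csum k (fun l => Cmul (del a l) (V l i))).
      rewrite <- Csum_sub. apply Csum_ext. intros. unfold V. ring.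
    - rewrite mmul_assoc. unfold mmul at 1.
      transitivity (Csub (Csum k (fun l => Cmul (V a l) (del l i))) (mmul k del V a i)).
      + f_equal. apply Csum_ext. intros l Hl. rewrite W0V by auto. reflexivity.
      + unfold mmul, del. rewrite Csum_delta_r by auto. rewrite Csum_delta_l by auto. ring. }
  pose proof (roots k (M p) z Hd (fun i Hi => HM p i Hp Hi) q Hq) as E.
  unfold M in E. replace (mmul k V W0 p q) with (Cadd (Csub (mmul k V W0 p q) (del p q)) (del p q)) by ring.
  rewrite E. ring.
Qed.

Lemma W0_inverse : is_inverse k V W0.
Proof. intros i j Hi Hj. split. apply VW0; auto. apply W0V; auto. Qed.

Lemma inverse_unique W : is_inverse k V W -> forall j q, (j < k)%nat -> (q < k)%nat -> W j q = W0 j q.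
Proof.
  intros HW j q Hj Hq.
  transitivity (mmul k (mmul k W0 V) W j q).
  - unfold mmul at 1. transitivity (Csum k (fun r => Cmul (if Nat.eqb j r then C1 else C0) (W r q))).
    + rewrite Csum_delta_l by auto. reflexivity.
    + apply Csum_ext. intros r Hr. rewrite W0V by auto. reflexivity.
  - rewrite mmul_assoc. unfold mmul at 1.
    transitivity (Csum k (fun l => Cmul (W0 j l) (if Nat.eqb l q then C1 else C0))).
    + apply Csum_ext. intros l Hl. f_equal. apply (proj1 (HW l q Hl Hq)).
    + apply Csum_delta_r. auto.
Qed.

Lemma row_bound j : (j < k)%nat ->
  Rsum k (fun q => Cmod (W0 j q)) <=
  Rprodx j k (fun l => 1 + Cmod (z l)) / Rprodx j k (fun l => Cmod (Csub (z j) (z l))).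
Proof.
  intros Hj. pose proof (Q_nz z j k Hd Hj) as Hq.
  rewrite <- Cmod_Q. unfold W0.
  transitivity (NL (PP z j k) k * / Cmod (Q z j k (z j))).
  - unfold NL. rewrite Rmult_comm, <- Rsum_scal. apply Req_le, Rsum_ext. intros.
    rewrite Cmod_mul, Cmod_inv by auto. ring.
  - unfold Rdiv. apply Rmult_le_compat_r.
    + left. apply Rinv_0_lt_compat. apply Cmod_pos. auto.
    + eapply Rle_trans. 2: apply NL_PP. unfold NL. simpl. pose proof (Cmod_ge0 (PP z j k k)). lra.
Qed.
End Mat.


Lemma cos_lb1 y : - PI / 2 <= y -> y <= PI / 2 -> 1 - y * y / 2 <= cos y.
Proof.
  intros H1 H2. pose proof (proj1 (cos_bound y 0 H1 H2)) as H.
  unfold cos_approx, cos_term in H. simpl in H. lra.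
Qed.

Lemma sin_lb1 x : 0 <= x -> x <= PI -> x - x * x * x / 6 <= sin x.
Proof.
  intros H1 H2. pose proof (proj1 (sin_bound x 0 H1 H2)) as H.
  unfold sin_approx, sin_term in H. simpl in H. lra.
Qed.

Lemma PI_bounds : 3 < PI /\ PI <= 4.
Proof. pose proof PI2_3_2. pose proof PI_4. lra. Qed.

Lemma jordan x : 0 <= x -> x <= PI / 2 -> 2 * x <= PI * sin x.
Proof.
  intros H1 H2. destruct PI_bounds as [P1 P2].
  set (y := PI / 2 - x).
  destruct (Rle_or_lt (y * PI) 4) as [Hy|Hy].
  - assert (E : sin x = cos y) by (unfold y; rewrite cos_shift; auto).
    rewrite E. assert (0 <= y) by (unfold y; lra).
    pose proof (cos_lb1 y ltac:(unfold y; lra) ltac:(unfold y; lra)).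
    assert (2 * x = PI - 2 * y) by (unfold y; lra).
    nra.
  - pose proof (sin_lb1 x H1 ltac:(lra)).
    assert (HxP : x * PI < 4) by (unfold y in Hy; nra).
    assert (x < 4/3) by nra.
    assert (PI * (x * x) <= 6 * (PI - 2)) by nra.
    nra.
Qed.


Lemma chord a b : Rabs (a - b) <= PI ->
  2 * Rabs (a - b) / PI <= Cmod (Csub (Cexpi a) (Cexpi b)).
Proof.
  intros H. destruct PI_bounds as [P1 P2].
  set (u := (a - b) / 2).
  set (t := Rabs u).
  assert (Hab : Rabs (a - b) = 2 * t).
  { unfold t, u. unfold Rabs. destruct (Rcase_abs (a - b)); destruct (Rcase_abs ((a - b) / 2)); lra. }
  assert (Ht : 0 <= t <= PI / 2) by (split; [apply Rabs_pos | lra]).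
  assert (Hst : sin u * sin u = sin t * sin t).
  { unfold t. destruct (Rle_or_lt 0 u). rewrite Rabs_right by lra. auto.
    rewrite Rabs_left by lra. rewrite sin_neg. ring. }
  assert (HS : (cos a + - cos b) * (cos a + - cos b) + (sin a + - sin b) * (sin a + - sin b) = 4 * (sin t * sin t)).
  { rewrite <- Hst. pose proof (sin2_cos2 a). pose proof (sin2_cos2 b).
    pose proof (cos_minus a b). replace (a - b) with (2 * u) in H2 by (unfold u; field).
    rewrite cos_2a_sin in H2. unfold Rsqr in *. nra. }
  pose proof (jordan t (proj1 Ht) (proj2 Ht)) as J.
  unfold Cmod, Csub, Cadd, Copp, Cexpi. simpl. rewrite HS.
  set (d := 2 * Rabs (a - b) / PI).
  assert (Hd0 : 0 <= d) by (unfold d; apply Rmult_le_pos; [pose proof (Rabs_pos (a-b)); lra | left; apply Rinv_0_lt_compat; lra]).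
  rewrite <- (sqrt_square d Hd0). apply sqrt_le_1_alt.
  assert (d * PI = 4 * t) by (unfold d; rewrite Hab; field; lra).
  assert (0 <= sin t) by (apply Rmult_le_reg_l with PI; nra).
  assert (d <= 2 * sin t) by (apply Rmult_le_reg_r with PI; nra).
  nra.
Qed.

Section Comb.
Local Open Scope nat_scope.

Definition distn (j l : nat) : nat := (j - l + (l - j))%nat.
Fixpoint Gn (j n : nat) : nat :=
  match n with O => 1%nat | S n => if Nat.eqb n j then Gn j n else (Gn j n * distn j n)%nat end.

Lemma Gn_gen j n : ((n <= j)%nat -> (Gn j n * fact (j - n) = fact j)%nat) /\
                   ((j < n)%nat -> Gn j n = (fact j * fact (n - 1 - j))%nat).
Proof.
  induction n; cbn [Gn].
  - split; intros. rewrite Nat.sub_0_r. lia. lia.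
  - destruct IHn as [I1 I2]. destruct (Nat.eqb_spec n j).
    + subst. split; intros. lia. replace (S j - 1 - j)%nat with 0%nat by lia.
      specialize (I1 (le_n j)). rewrite Nat.sub_diag in I1. simpl in *. lia.
    + split; intros.
      * specialize (I1 ltac:(lia)). unfold distn.
        replace (j - n)%nat with (S (j - S n)) in I1 by lia. simpl fact in I1.
        replace (j - n + (n - j))%nat with (S (j - S n)) by lia. rewrite <- I1. lia.
      * specialize (I2 ltac:(lia)). unfold distn. rewrite I2.
        replace (S n - 1 - j)%nat with (S (n - 1 - j)) by lia. simpl fact.
        replace (j - n + (n - j))%nat with (S (n - 1 - j)) by lia. lia.
Qed.

Lemma Gn_fact j n : (j < n)%nat -> Gn j n = (fact j * fact (n - 1 - j))%nat.
Proof. apply Gn_gen. Qed.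

Lemma balance d : forall a b, a = (b + d)%nat ->
  (fact ((a + b) / 2) * fact (a + b - (a + b) / 2) <= fact a * fact b)%nat.
Proof.
  induction d as [d IH] using (well_founded_induction Nat.lt_wf_0).
  intros a b Hab.
  destruct (Nat.lt_ge_cases d 2) as [Hd|Hd].
  - assert (E : (a + b) / 2 = b).
    { symmetry. apply (Nat.div_unique _ _ _ d); lia. }
    rewrite E. replace (a + b - b)%nat with a by lia. rewrite Nat.mul_comm. lia.
  - specialize (IH (d - 2)%nat ltac:(lia) (a - 1)%nat (b + 1)%nat ltac:(lia)).
    replace (a - 1 + (b + 1))%nat with (a + b)%nat in IH by lia.
    eapply Nat.le_trans. exact IH.
    replace a with (S (a - 1)) at 2 by lia. replace (b + 1)%nat with (S b) by lia.
    simpl fact. assert (b + 1 <= S (a - 1))%nat by lia. nia.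
Qed.

Lemma zeta_eq k : (2 <= k)%nat ->
  zeta k = (fact ((k - 1) / 2) * fact (k - 1 - (k - 1) / 2))%nat.
Proof.
  intros Hk. unfold zeta. destruct (Nat.odd k) eqn:E.
  - apply Nat.odd_spec in E. destruct E as [t Ht].
    assert (D : (k - 1) / 2 = t). { symmetry. apply (Nat.div_unique _ _ _ 0); lia. }
    rewrite D. f_equal. f_equal. lia.
  - assert (Nat.even k = true) by (rewrite <- Nat.negb_odd, E; auto).
    apply Nat.even_spec in H. destruct H as [t Ht].
    assert (D1 : (k - 1) / 2 = (t - 1)%nat). { symmetry. apply (Nat.div_unique _ _ _ 1); lia. }
    assert (D2 : k / 2 = t). { symmetry. apply (Nat.div_unique _ _ _ 0); lia. }
    assert (D3 : (k - 2) / 2 = (t - 1)%nat). { symmetry. apply (Nat.div_unique _ _ _ 0); lia. }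
    rewrite D1, D2, D3. replace (k - 1 - (t - 1))%nat with t by lia. lia.
Qed.

Lemma zeta_le k j : (2 <= k)%nat -> (j < k)%nat -> (zeta k <= fact j * fact (k - 1 - j))%nat.
Proof.
  intros Hk Hj. rewrite zeta_eq by auto.
  destruct (Nat.le_ge_cases j (k - 1 - j)) as [H|H].
  - pose proof (balance (k - 1 - j - j) (k - 1 - j) j ltac:(lia)) as B.
    replace (k - 1 - j + j)%nat with (k - 1)%nat in B by lia. lia.
  - pose proof (balance (j - (k - 1 - j)) j (k - 1 - j) ltac:(lia)) as B.
    replace (j + (k - 1 - j))%nat with (k - 1)%nat in B by lia. lia.
Qed.

Lemma zeta_pos k : (0 < zeta k)%nat.
Proof. unfold zeta. destruct (Nat.odd k); pose proof (lt_O_fact ((k-1)/2)); pose proof (lt_O_fact (k/2)); pose proof (lt_O_fact ((k-2)/2)); nia. Qed.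

End Comb.


Lemma Rprodx_ext j n f g : (forall l, (l < n)%nat -> l <> j -> f l = g l) -> Rprodx j n f = Rprodx j n g.
Proof.
  induction n; intros H; simpl. auto. destruct (Nat.eqb_spec n j). apply IHn; intros; apply H; lia.
  rewrite IHn by (intros; apply H; lia). rewrite H by lia. auto.
Qed.

Lemma INR_Gn j n : INR (Gn j n) = Rprodx j n (fun l => INR (distn j l)).
Proof. induction n; simpl. auto. destruct (Nat.eqb_spec n j). auto. rewrite mult_INR, IHn. auto. Qed.

Lemma Rmax_upto_le n f B : (forall i, (i < n)%nat -> f i <= B) -> 0 <= B -> Rmax_upto n f <= B.
Proof.
  induction n; intros H HB; simpl. auto. apply Rmax_lub. apply IHn; auto. apply H; lia.
Qed.

Lemma Cmod_expi t : Cmod (Cexpi t) = 1.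
Proof. unfold Cmod, Cexpi. simpl. rewrite <- sqrt_1. f_equal. pose proof (sin2_cos2 t). unfold Rsqr in H. lra. Qed.

Section Main.
Variable k : nat.
Variable th : nat -> R.
Variable thmin : R.
Hypothesis hk : (2 <= k)%nat.
Hypothesis hlo : - (PI / 2) <= th 0%nat.
Hypothesis hhi : th (k - 1)%nat <= PI / 2.
Hypothesis hinc : forall i, (i + 1 < k)%nat -> th i < th (i + 1)%nat.
Hypothesis hmin : is_min_sep k th thmin.

Lemma th_strict i l : (i < l)%nat -> (l < k)%nat -> th i < th l.
Proof.
  induction l; intros H1 H2. lia.
  destruct (Nat.eq_dec i l). subst. replace (S l) with (l + 1)%nat by lia. apply hinc. lia.
  eapply Rlt_trans. apply IHl; lia. replace (S l) with (l + 1)%nat by lia. apply hinc. lia.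
Qed.

Lemma th_le i l : (i <= l)%nat -> (l < k)%nat -> th i <= th l.
Proof. intros. destruct (Nat.eq_dec i l). subst; lra. left. apply th_strict; lia. Qed.

Lemma thmin_pos : 0 < thmin.
Proof.
  destruct hmin as [[p [j [Hp [Hj [Hpj E]]]]] _]. rewrite E.
  apply Rabs_pos_lt. destruct (Nat.lt_ge_cases p j).
  - pose proof (th_strict p j H Hj). lra.
  - pose proof (th_strict j p ltac:(lia) Hp). lra.
Qed.

Lemma th_sep i l : (i <= l)%nat -> (l < k)%nat -> INR (l - i) * thmin <= th l - th i.
Proof.
  induction l; intros H1 H2.
  - assert (i = 0%nat) by lia. subst. simpl. lra.
  - destruct (Nat.eq_dec i (S l)). subst. rewrite Nat.sub_diag. simpl. lra.
    replace (S l - i)%nat with (S (l - i)) by lia. rewrite S_INR.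
    pose proof (IHl ltac:(lia) ltac:(lia)).
    assert (thmin <= th (S l) - th l).
    { destruct hmin as [_ Hm]. pose proof (Hm (S l) l H2 ltac:(lia) ltac:(lia)).
      pose proof (th_strict l (S l) ltac:(lia) H2). rewrite Rabs_right in H0 by lra. lra. }
    lra.
Qed.

Lemma th_range i : (i < k)%nat -> - (PI / 2) <= th i <= PI / 2.
Proof. intros. split. pose proof (th_le 0 i ltac:(lia) H). lra. pose proof (th_le i (k-1) ltac:(lia) ltac:(lia)). lra. Qed.

Lemma th_dist j l : (j < k)%nat -> (l < k)%nat -> INR (distn j l) * thmin <= Rabs (th j - th l).
Proof.
  intros Hj Hl. unfold distn. destruct (Nat.le_ge_cases j l).
  - replace (j - l + (l - j))%nat with (l - j)%nat by lia. pose proof (th_sep j l H Hl).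
    rewrite Rabs_left1 by (pose proof (th_le j l H Hl); lra). lra.
  - replace (j - l + (l - j))%nat with (j - l)%nat by lia. pose proof (th_sep l j H Hj).
    rewrite Rabs_right by (pose proof (th_le l j H Hj); lra). lra.
Qed.

Definition zz : nat -> CT := fun l => Cexpi (th l).

Lemma zz_distinct a b : (a < k)%nat -> (b < k)%nat -> a <> b -> zz a <> zz b.
Proof.
  intros Ha Hb Hab E.
  assert (HC : Cmod (Csub (zz a) (zz b)) = 0).
  { rewrite E. replace (Csub (zz b) (zz b)) with C0 by ring. apply Cmod_C0. }
  pose proof (th_range a Ha). pose proof (th_range b Hb).
  assert (Rabs (th a - th b) <= PI) by (unfold Rabs; destruct Rcase_abs; lra).
  pose proof (chord (th a) (th b) H1). unfold zz in HC. rewrite HC in H2.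
  assert (0 < Rabs (th a - th b)).
  { apply Rabs_pos_lt. destruct (Nat.lt_ge_cases a b).
    pose proof (th_strict a b H3 Hb). lra. pose proof (th_strict b a ltac:(lia) Ha). lra. }
  destruct PI_bounds. assert (0 < 2 * Rabs (th a - th b) / PI).
  { apply Rdiv_lt_0_compat; lra. } lra.
Qed.

Lemma row_final j : (j < k)%nat ->
  Rsum k (fun q => Cmod (W0 zz k j q)) <= PI ^ (k - 1) / (INR (zeta k) * thmin ^ (k - 1)).
Proof.
  intros Hj. eapply Rle_trans. apply row_bound. exact zz_distinct. exact Hj.
  destruct PI_bounds as [P1 P2]. pose proof thmin_pos as Ht.
  set (c := 2 * thmin / PI).
  assert (Hc : 0 < c) by (unfold c; apply Rdiv_lt_0_compat; lra).
  set (B := c ^ (k - 1) * INR (zeta k)).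
  assert (HB : 0 < B) by (unfold B; apply Rmult_lt_0_compat; [apply pow_lt; auto | apply lt_0_INR; apply zeta_pos]).
  assert (Hnum : Rprodx j k (fun l => 1 + Cmod (zz l)) = 2 ^ (k - 1)).
  { rewrite <- (Rprodx_const j k 2 Hj). apply Rprodx_ext. intros. unfold zz. rewrite Cmod_expi. ring. }
  assert (Hden : B <= Rprodx j k (fun l => Cmod (Csub (zz j) (zz l)))).
  { apply Rle_trans with (Rprodx j k (fun l => c * INR (distn j l))).
    - rewrite Rprodx_mul, Rprodx_const by auto. rewrite <- INR_Gn. unfold B.
      apply Rmult_le_compat_l. left; apply pow_lt; auto. apply le_INR.
      rewrite Gn_fact by auto. apply zeta_le; auto.
    - apply Rprodx_le. intros l Hl Hlj. split.
      + apply Rmult_le_pos. lra. apply pos_INR.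
      + pose proof (th_dist j l Hj Hl). pose proof (th_range j Hj). pose proof (th_range l Hl).
        assert (Rabs (th j - th l) <= PI) by (unfold Rabs; destruct Rcase_abs; lra).
        pose proof (chord (th j) (th l) H2). unfold zz.
        eapply Rle_trans. 2: exact H3. unfold c. unfold Rdiv.
        apply Rle_trans with (2 * (INR (distn j l) * thmin) * / PI). right; ring.
        apply Rmult_le_compat_r. left; apply Rinv_0_lt_compat; lra. lra. }
  rewrite Hnum. apply Rle_trans with (2 ^ (k - 1) / B).
  - unfold Rdiv. apply Rmult_le_compat_l. left; apply pow_lt; lra.
    apply Rinv_le_contravar; auto.
  - right. unfold B, c. unfold Rdiv. rewrite !Rpow_mult_distr, pow_inv.
    pose proof (pow_lt PI (k-1) ltac:(lra)). pose proof (pow_lt thmin (k-1) Ht).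
    pose proof (pow_lt 2 (k-1) ltac:(lra)). pose proof (lt_0_INR _ (zeta_pos k)).
    field. repeat split; lra.
Qed.

End Main.

Theorem lemma3p3 (k : nat) (th : nat -> R) (thmin : R)
  (hk : (2 <= k)%nat)
  (hlo : - (PI / 2) <= th 0%nat)
  (hhi : th (k - 1)%nat <= PI / 2)
  (hinc : forall i, (i + 1 < k)%nat -> th i < th (i + 1)%nat)
  (hmin : is_min_sep k th thmin) :
  (exists W : Cmat, is_inverse k (Vand th) W) /\
  (forall W : Cmat, is_inverse k (Vand th) W ->
     norm_inf k W <= PI ^ (k - 1) / (INR (zeta k) * thmin ^ (k - 1))).
Proof.
  assert (HV : Vand th = V (zz th)) by reflexivity.
  assert (Hd : forall a b, (a < k)%nat -> (b < k)%nat -> a <> b -> zz th a <> zz th b)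
    by (intros; eapply zz_distinct; eauto).
  split.
  - exists (W0 (zz th) k). rewrite HV. apply W0_inverse. exact Hd.
  - intros W HW. rewrite HV in HW. unfold norm_inf. apply Rmax_upto_le.
    + intros j Hj. rewrite (Rsum_ext _ _ (fun q => Cmod (W0 (zz th) k j q))).
      eapply row_final; eauto.
      intros q Hq. rewrite (inverse_unique (zz th) k Hd W HW j q Hj Hq). reflexivity.
    + destruct PI_bounds. assert (0 < thmin) by (eapply thmin_pos; eauto).
      pose proof (lt_0_INR _ (zeta_pos k)).
      unfold Rdiv. apply Rmult_le_pos. left; apply pow_lt; lra. left; apply Rinv_0_lt_compat.
      apply Rmult_lt_0_compat; auto. apply pow_lt; auto.
Qed.
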